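(* Let $I$ be a nonempty finite set, $C=(c_{ij})_{i,j\in I}$ a generalized Cartan matrix, $\mathcal C=\mathcal C(I,A,(\rho_i)_{i\in I},(C^a)_{a\in A})$ a connected standard Cartan scheme with $C^a=C$ for all $a\in A$, and $\mathcal R=\mathcal R(\mathcal C,(R^a)_{a\in A})$ a root system of type $\mathcal C$. Then: (1) for every $a\in A$ the set of all $f\in\mathrm{Aut}(\mathbb Z^I)$ such that $f$ underlies a morphism in $\mathrm{Hom}(a,b)$ for some $b\in A$ is a subgroup of $\mathrm{Aut}(\mathbb Z^I)$ isomorphic to the Weyl group $W(C)$; (2) $\mathcal R$ is finite if and only if $C$ is of finite type; (3) if $\mathcal R$ is finite, then for all $a\in A$, $R^a$ is the set of roots corresponding to $W(C)$; in particular it is independent of $a$.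
   Context: $\{\alpha_i\mid i\in I\}$ is the standard basis of $\mathbb Z^I$; $\mathbb N_0=\{0,1,2,\dots\}$. A generalized Cartan matrix is $C=(c_{ij})_{i,j\in I}\in\mathbb Z^{I\times I}$ with $c_{ii}=2$, $c_{jk}\le0$ for $j\ne k$, and $c_{ij}=0\Rightarrow c_{ji}=0$. A Cartan scheme $\mathcal C=\mathcal C(I,A,(\rho_i)_{i\in I},(C^a)_{a\in A})$ consists of a nonempty set $A$, maps $\rho_i:A\to A$ and generalized Cartan matrices $C^a=(c^a_{jk})_{j,k\in I}$ such that (C1) $\rho_i^2=\mathrm{id}$ and (C2) $c^a_{ij}=c^{\rho_i(a)}_{ij}$ for all $a\in A$, $i,j\in I$. It is connected if the group generated by the $\rho_i$ acts transitively on $A$, and standard if $C^a=C^b$ for all $a,b\in A$. For $i\in I$, $a\in A$ let $\sigma_i^a\in\mathrm{Aut}(\mathbb Z^I)$, $\sigma_i^a(\alpha_j)=\alpha_j-c^a_{ij}\alpha_i$. The Weyl groupoid has object set $A$; $\mathrm{Hom}(a,b)$ consists of the triples $(b,f,a)$ with $f=\sigma_{i_n}^{a_{n-1}}\cdots\sigma_{i_1}^{a_0}$, where $n\ge0$, $i_1,\dots,i_n\in I$, $a_0=a$, $a_k=\rho_{i_k}(a_{k-1})$, $a_n=b$; composition is multiplication in $\mathrm{Aut}(\mathbb Z^I)$. A root system of type $\mathcal C$ is a family $\mathcal R=\mathcal R(\mathcal C,(R^a)_{a\in A})$ of subsets $R^a\subset\mathbb Z^I$ such that, writing $R^a_+=R^a\cap\mathbb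 N_0^I$ and $m^a_{i,j}=|R^a\cap(\mathbb N_0\alpha_i+\mathbb N_0\alpha_j)|$, for all $a\in A$, $i,j\in I$: (R1) $R^a=R^a_+\cup(-R^a_+)$; (R2) $R^a\cap\mathbb Z\alpha_i=\{\alpha_i,-\alpha_i\}$; (R3) $\sigma_i^a(R^a)=R^{\rho_i(a)}$; (R4) if $i\neq j$ and $m^a_{i,j}$ is finite then $(\rho_i\rho_j)^{m^a_{i,j}}(a)=a$. It is finite if every $R^a$ is finite. $W(C)$ is the subgroup of $\mathrm{Aut}(\mathbb Z^I)$ generated by $s_i(\alpha_j)=\alpha_j-c_{ij}\alpha_i$, $i\in I$, and its set of roots is $\{w(\alpha_i)\mid w\in W(C), i\in I\}$. *)

(* Defs.v *)
(* The index set I is 'I_n (with 0 < n); Z^I is the type of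
   integer column vectors 'cV[int]_n; endomorphisms of Z^I are matrices
   'M[int]_n acting on the left; Aut(Z^I) = unit matrices (det = +-1). *)
From HB Require Import structures.
From mathcomp Require Import all_boot all_order all_algebra.
From Stdlib Require Import Reals.
From mathcomp Require Import Rstruct.
Set Implicit Arguments. Unset Strict Implicit. Unset Printing Implicit Defensive.
Import Order.TTheory GRing.Theory Num.Theory.
Local Open Scope ring_scope.

Section Defs.
Variable n : nat.

Definition alpha (i : 'I_n) : 'cV[int]_n := delta_mx i 0.

Definition nonneg_vec (v : 'cV[int]_n) : Prop := forall k, 0 <= v k 0.

Definition is_GCM (C : 'M[int]_n) : Prop :=
  (forall i, C i i = 2) /\
  (forall j k, j != k -> C j k <= 0) /\
  (forall i j, C i j = 0 -> C j i = 0).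

(* sigma_i^a for the Cartan matrix Ca = C^a :
   sigma(alpha_j) = alpha_j - c_ij alpha_i, i.e. column j is alpha_j - c_ij alpha_i *)
Definition sigma (Ca : 'M[int]_n) (i : 'I_n) : 'M[int]_n :=
  \matrix_(k, j) ((k == j)%:Z - (k == i)%:Z * Ca i j).

Section Scheme.
Variables (A : Type) (rho : 'I_n -> A -> A) (Cs : A -> 'M[int]_n).

Definition is_cartan_scheme : Prop :=
  (forall a, is_GCM (Cs a)) /\
  (forall i a, rho i (rho i a) = a) /\
  (forall a i j, Cs a i j = Cs (rho i a) i j).

Definition wend (a : A) (w : seq 'I_n) : A := foldl (fun x i => rho i x) a w.

Fixpoint wmap (a : A) (w : seq 'I_n) : 'M[int]_n :=
  match w with
  | [::] => 1%:M
  | i :: w' => wmap (rho i a) w' *m sigma (Cs a) i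
  end.

Definition is_hom (a b : A) (f : 'M[int]_n) : Prop :=
  exists w : seq 'I_n, wend a w = b /\ f = wmap a w.

Definition connected : Prop := forall a b : A, exists w, wend a w = b.

Definition standard : Prop := forall a b, Cs a = Cs b.

Definition finite_set (P : 'cV[int]_n -> Prop) : Prop :=
  exists s : seq 'cV[int]_n, forall v, P v <-> v \in s.

Definition card_is (P : 'cV[int]_n -> Prop) (m : nat) : Prop :=
  exists s : seq 'cV[int]_n, [/\ uniq s, size s = m & forall v, P v <-> v \in s].

Definition in_span2 (i j : 'I_n) (v : 'cV[int]_n) : Prop :=
  exists k l : nat, v = k%:Z *: alpha i + l%:Z *: alpha j.

Definition is_root_system (R : A -> 'cV[int]_n -> Prop) : Prop :=
  [/\
      (forall a v, R a v <-> (R a v /\ nonneg_vec v) \/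
                             (exists u, R a u /\ nonneg_vec u /\ v = - u)),
      (forall a i v, (R a v /\ exists k : int, v = k *: alpha i) <->
                     (v = alpha i \/ v = - alpha i)),
      (forall a i v, R (rho i a) v <-> exists u, R a u /\ v = sigma (Cs a) i *m u) &
      (forall a i j (m : nat), i != j ->
         card_is (fun v => R a v /\ in_span2 i j v) m ->
         iter m (fun x => rho i (rho j x)) a = a)].

End Scheme.

(* W(C): the subgroup of Aut(Z^I) generated by the s_i: finite products of
   generators and their inverses *)
Definition in_weyl (C : 'M[int]_n) (M : 'M[int]_n) : Prop :=
  exists w : seq ('I_n * bool),
    M = foldr (fun p N => (if p.2 then sigma C p.1 else invmx (sigma C p.1)) *m N)
              1%:M w.

Definition is_weyl_root (C : 'M[int]_n) (v : 'cV[int]_n) : Prop :=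
  exists M i, in_weyl C M /\ v = M *m alpha i.

Definition is_aut_subgroup (H : 'M[int]_n -> Prop) : Prop :=
  [/\ forall M, H M -> M \in unitmx,
      H 1%:M,
      forall M N, H M -> H N -> H (M *m N) &
      forall M, H M -> H (invmx M)].

Definition group_iso (H K : 'M[int]_n -> Prop) : Prop :=
  exists phi : 'M[int]_n -> 'M[int]_n,
    [/\ forall x y, H x -> H y -> phi (x *m y) = phi x *m phi y,
        forall x, H x -> K (phi x),
        forall x y, H x -> H y -> phi x = phi y -> x = y &
        forall y, K y -> exists x, H x /\ phi x = y].

(* Kac's notion of finite type.  J is an indecomposable component of C. *)
Definition is_component (C : 'M[int]_n) (J : {set 'I_n}) : Prop :=
  [/\ J != set0,
      (forall i j, i \in J -> j \notin J -> C i j = 0) &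
      (forall K : {set 'I_n}, K \subset J -> K != set0 -> K != J ->
         exists i j, [/\ i \in K, j \in J, j \notin K & C i j != 0])].

(* condition (Fin) of Kac, Thm 4.3, for the principal submatrix C_J, real vectors *)
Definition fin_cond (C : 'M[int]_n) (J : {set 'I_n}) : Prop :=
  [/\ \det (\matrix_(k < #|J|, l < #|J|) ((C (enum_val k) (enum_val l))%:~R : R)) != 0,
      (exists u : 'I_n -> R, (forall j, j \in J -> 0 < u j) /\
         (forall i, i \in J -> 0 < \sum_(j in J) (C i j)%:~R * u j)) &
      (forall v : 'I_n -> R,
         (forall i, i \in J -> 0 <= \sum_(j in J) (C i j)%:~R * v j) ->
         (forall j, j \in J -> 0 < v j) \/ (forall j, j \in J -> v j = 0))].

Definition finite_type (C : 'M[int]_n) : Prop :=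
  forall J, is_component C J -> fin_cond C J.

End Defs.

(* Main.v *)
Require Import Defs.
From HB Require Import structures.
From mathcomp Require Import all_boot all_order all_algebra.
From Stdlib Require Import ClassicalEpsilon.
From Stdlib Require Reals.
From mathcomp Require Import Rstruct.
From mathcomp Require Import ring lra zify.
Set Implicit Arguments. Unset Strict Implicit. Unset Printing Implicit Defensive.
Import Order.TTheory GRing.Theory Num.Theory.
Local Open Scope ring_scope.
Section Basic.
Variable n : nat.
Variable C : 'M[int]_n.
Hypothesis hC : is_GCM C.

Lemma sigma_def i : sigma C i = 1%:M - alpha i *m row i C.
Proof.
apply/matrixP => k j; rewrite !mxE big_ord1 !mxE /=.
by rewrite eqxx andbT; case: (k == j); case: (k == i).
Qed.

Lemma row_alpha i : row i C *m alpha i = (2 : int)%:M.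
Proof.
apply/matrixP => x y; rewrite (ord1 x) (ord1 y) !mxE.
rewrite (bigD1 i) //= big1 ?addr0; last by move=> j /negbTE ji; rewrite !mxE ji mulr0.
by rewrite !mxE !eqxx mulr1 hC.1.
Qed.

Lemma sigma_invol i : sigma C i *m sigma C i = 1%:M.
Proof.
rewrite sigma_def mulmxBl mul1mx mulmxBr mulmx1 -!mulmxA.
rewrite (mulmxA (row i C)) row_alpha mul_scalar_mx -scalemxAr.
have -> : (2 : int) *: (alpha i *m row i C) = alpha i *m row i C + alpha i *m row i C.
  by rewrite scalerDl scale1r.
set X := alpha i *m row i C.
by rewrite opprD !addrA opprK -addrA addKr subrK.
Qed.

Lemma sigma_unit i : sigma C i \in unitmx.
Proof. by case: (mulmx1_unit (sigma_invol i)). Qed.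

Lemma invmx_sigma i : invmx (sigma C i) = sigma C i.
Proof.
have u := sigma_unit i.
by rewrite -[LHS]mulmx1 -(sigma_invol i) mulmxA mulVmx // mul1mx.
Qed.

Lemma sigma_vec i (v : 'cV[int]_n) :
  sigma C i *m v = v - (\sum_j C i j * v j 0) *: alpha i.
Proof.
rewrite sigma_def mulmxBl mul1mx -mulmxA.
congr (_ - _); apply/matrixP => x y; rewrite (ord1 y) !mxE big_ord1 !mxE.
by rewrite mulrC; congr (_ * _); apply: eq_bigr => j _; rewrite !mxE.
Qed.

Definition Pw (w : seq 'I_n) : 'M[int]_n := foldr (fun i M => M *m sigma C i) 1%:M w.

Lemma Pw_cat w1 w2 : Pw (w1 ++ w2) = Pw w2 *m Pw w1.
Proof. elim: w1 => [|i w1 IH] /=; first by rewrite mulmx1. by rewrite IH mulmxA. Qed.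

Lemma Pw_rev w : Pw w *m Pw (rev w) = 1%:M.
Proof.
elim: w => [|i w IH] /=; first by rewrite mulmx1.
rewrite rev_cons -cats1 Pw_cat /= mul1mx -mulmxA (mulmxA (sigma C i)) sigma_invol mul1mx.
exact: IH.
Qed.

Lemma Pw_unit w : Pw w \in unitmx.
Proof. by case: (mulmx1_unit (Pw_rev w)). Qed.

Lemma Pw_inv w : invmx (Pw w) = Pw (rev w).
Proof.
have u := Pw_unit w.
by rewrite -[LHS]mulmx1 -(Pw_rev w) mulmxA mulVmx // mul1mx.
Qed.

Definition gen (p : 'I_n * bool) := if p.2 then sigma C p.1 else invmx (sigma C p.1).

Lemma in_weyl_Pw M : in_weyl C M <-> exists w, M = Pw w.
Proof.
split.
  case=> ws ->; exists (rev (map fst ws)).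
  elim: ws => [|[i b] ws IH] //=.
  rewrite rev_cons -cats1 Pw_cat /= mul1mx -IH.
  by case: b => //=; rewrite invmx_sigma.
case=> w ->; exists (rev (map (fun i => (i, true)) w)).
elim: w => [|i w IH] //=.
rewrite rev_cons -cats1 foldr_cat /= mulmx1.
rewrite IH; elim: (rev _) (sigma C i) => [|p s IH2] X /=; first by rewrite mul1mx.
by rewrite -mulmxA IH2.
Qed.
End Basic.
Section Scheme.
Variable n : nat.
Variable C : 'M[int]_n.
Hypothesis hC : is_GCM C.
Variables (A : Type) (rho : 'I_n -> A -> A) (Cs : A -> 'M[int]_n).
Hypothesis hsch : is_cartan_scheme rho Cs.
Hypothesis hCa : forall a, Cs a = C.
Variable R : A -> 'cV[int]_n -> Prop.
Hypothesis hR : is_root_system rho Cs R.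

Lemma wmap_Pw a w : wmap rho Cs a w = Pw C w.
Proof. by elim: w a => [|i w IH] a //=; rewrite IH hCa. Qed.

Lemma wend_cat a w1 w2 : wend rho a (w1 ++ w2) = wend rho (wend rho a w1) w2.
Proof. by rewrite /wend foldl_cat. Qed.

Lemma wend_rev a w : wend rho (wend rho a (rev w)) w = a.
Proof.
elim: w a => [|i w IH] a //=.
rewrite rev_cons -cats1 wend_cat /=.
by case: hsch => _ [inv _]; rewrite inv IH.
Qed.

Lemma is_hom_Pw a f : (exists b, is_hom rho Cs a b f) <-> exists w, f = Pw C w.
Proof.
split; first by case=> b [w [_ ->]]; exists w; rewrite wmap_Pw.
by case=> w ->; exists (wend rho a w), w; rewrite wmap_Pw.
Qed.

Lemma R_transport w a u : R a u -> R (wend rho a w) (wmap rho Cs a w *m u).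
Proof.
elim: w a u => [|i w IH] a u /= Hu; first by rewrite mul1mx.
rewrite -mulmxA; apply: IH.
by case: hR => _ _ R3 _; apply/R3; exists u.
Qed.

Lemma R_alpha a i : R a (alpha i).
Proof. by case: hR => _ R2 _ _; case: (R2 a i (alpha i)) => _ /(_ (or_introl erefl)) []. Qed.

Definition Phi (v : 'cV[int]_n) := exists w j, v = Pw C w *m alpha j.

Lemma Phi_R a v : Phi v -> R a v.
Proof.
case=> w [j ->]; rewrite -(wend_rev a w) -(wmap_Pw (wend rho a (rev w))).
exact/R_transport/R_alpha.
Qed.

Lemma R_sigma a i v : R a v -> R (rho i a) (sigma C i *m v).
Proof. by case: hR => _ _ R3 _ Hv; apply/R3; exists v; rewrite hCa. Qed.

Lemma R_sigma_inv a i v : R (rho i a) v -> R a (sigma C i *m v).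
Proof.
move=> Hv; have := R_sigma i Hv.
by case: hsch => _ [inv _]; rewrite inv.
Qed.

Lemma R_R1 a v : R a v -> nonneg_vec v \/ nonneg_vec (- v).
Proof.
case: hR => R1 _ _ _ /R1 [[_ h]|[u [_ [hu ->]]]]; [by left|right].
by rewrite opprK.
Qed.

Lemma R_mult a i v (k : int) : R a v -> v = k *: alpha i -> v = alpha i \/ v = - alpha i.
Proof. by case: hR => _ R2 _ _ Hv Hk; apply/(R2 a i v); split => //; exists k. Qed.

End Scheme.
Section Real.
Variable n : nat.
Variable C : 'M[int]_n.
Hypothesis hC : is_GCM C.
Variable F : realFieldType.

Definition cr i j : F := (C i j)%:~R.

Lemma cr_diag i : cr i i = 2.
Proof. by rewrite /cr hC.1. Qed.

Lemma cr_off i j : i != j -> cr i j <= 0.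
Proof. by move=> ij; rewrite /cr lerz0; case: hC => _ [h _]; apply: h. Qed.

Lemma cr_eq0 i j : (cr i j == 0) = (C i j == 0).
Proof. by rewrite /cr intr_eq0. Qed.

Definition SS (S : {set 'I_n}) (u : 'I_n -> F) i := \sum_(j in S) cr i j * u j.

Lemma SS_lin S (u v : 'I_n -> F) a b i :
  SS S (fun j => a * u j + b * v j) i = a * SS S u i + b * SS S v i.
Proof.
rewrite /SS !mulr_sumr -big_split /=; apply: eq_bigr => j _; ring.
Qed.

Lemma exists_min_seq (s : seq 'I_n) (f : 'I_n -> F) :
  s != [::] -> exists2 k, k \in s & forall j, j \in s -> f k <= f j.
Proof.
elim: s => [|y s IH] // _.
case: (altP (s =P [::])) => [->|sn].
  by exists y; rewrite ?inE ?eqxx // => j; rewrite inE => /eqP ->.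
case: (IH sn) => k Hk H.
have [le|lt] := leP (f k) (f y).
  exists k; first by rewrite inE Hk orbT.
  by move=> j; rewrite inE => /orP [/eqP ->|/H].
exists y; first by rewrite inE eqxx.
move=> j; rewrite inE => /orP [/eqP ->|/H]; first by [].
by apply: le_trans; apply: ltW.
Qed.

Lemma exists_min (S : {set 'I_n}) (f : 'I_n -> F) :
  S != set0 -> exists2 k, k \in S & forall j, j \in S -> f k <= f j.
Proof.
case/set0Pn => x0 Hx0.
have : enum S != [::] by apply/eqP => E; move: Hx0; rewrite -mem_enum E.
case/(exists_min_seq f) => k; rewrite mem_enum => Hk H.
by exists k => // j Hj; apply: H; rewrite mem_enum.
Qed.

Lemma SS_off_le0 (S : {set 'I_n}) (w : 'I_n -> F) k : k \in S -> w k = 0 ->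
  (forall j, j \in S -> 0 <= w j) -> SS S w k <= 0.
Proof.
move=> kS wk wS; apply: sumr_le0 => j jS.
case: (eqVneq k j) => [<-|kj]; first by rewrite wk mulr0.
by apply: mulr_le0_ge0; [apply: cr_off|apply: wS].
Qed.

Lemma no_pos_sub (S : {set 'I_n}) (u v : 'I_n -> F) : S != set0 ->
  (forall j, j \in S -> 0 < u j) -> (forall i, i \in S -> 0 < SS S u i) ->
  (forall j, j \in S -> 0 < v j) -> (forall i, i \in S -> SS S v i <= 0) -> False.
Proof.
move=> S0 hu hSu hv hSv.
case: (exists_min (fun j => u j / v j) S0) => k kS kmin.
set m := u k / v k.
have m0 : 0 < m by rewrite /m divr_gt0 ?hu ?hv.
have wge : forall j, j \in S -> 0 <= 1 * u j + (- m) * v j.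
  move=> j jS; have := kmin j jS; rewrite -/m => h.
  have vj := hv j jS.
  rewrite mul1r mulNr subr_ge0 -ler_pdivlMr //.
have wk : 1 * u k + (- m) * v k = 0.
  by rewrite /m mul1r mulNr divfK ?subrr // gt_eqF ?hv.
have := SS_off_le0 kS wk wge; rewrite SS_lin.
have := hSu k kS; have := hSv k kS => h1 h2.
move: (SS S u k) (SS S v k) h1 h2 m0 => a b h1 h2 m0 H.
nra.
Qed.


Lemma Zlemma (J : {set 'I_n}) (w : 'I_n -> F) : is_component C J ->
  (forall j, j \in J -> 0 <= w j) -> (forall i, i \in J -> 0 <= SS J w i) ->
  forall k, k \in J -> w k = 0 -> forall j, j \in J -> w j = 0.
Proof.
move=> [_ _ indec] wge Sge k kJ wk.
set Z := [set j in J | w j == 0].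
have ZJ : Z \subset J by apply/subsetP => x; rewrite inE => /andP [].
case: (eqVneq Z J) => [EZ|NZ].
  by move=> j; rewrite -EZ inE => /andP [_ /eqP].
have Z0 : Z != set0 by apply/set0Pn; exists k; rewrite inE kJ wk eqxx.
case: (indec Z ZJ Z0 NZ) => i [j [iZ jJ jZ Cij]].
move: iZ; rewrite inE => /andP [iJ /eqP wi].
have SS0 : SS J w i = 0.
  by apply/le_anti; rewrite Sge // SS_off_le0.
have : cr i j * w j = 0.
  have hpos : forall x, x \in J -> 0 <= - (cr i x * w x).
    move=> x xJ; rewrite oppr_ge0; case: (eqVneq i x) => [<-|ix].
      by rewrite wi mulr0.
    by apply: mulr_le0_ge0; [apply: cr_off|apply: wge].
  have hsum : \sum_(x in J) - (cr i x * w x) = 0.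
    by rewrite sumrN -/(SS J w i) SS0 oppr0.
  by have := psumr_eq0P hpos hsum jJ => /eqP; rewrite oppr_eq0 => /eqP.
move/eqP; rewrite mulf_eq0 cr_eq0 (negbTE Cij) /= => /eqP wj.
by move: jZ; rewrite inE jJ wj eqxx.
Qed.

Lemma clause3_of (J : {set 'I_n}) (u v : 'I_n -> F) : is_component C J ->
  (forall j, j \in J -> 0 < u j) -> (forall i, i \in J -> 0 < SS J u i) ->
  (forall i, i \in J -> 0 <= SS J v i) ->
  (forall j, j \in J -> 0 < v j) \/ (forall j, j \in J -> v j = 0).
Proof.
move=> hJ hu hSu hSv.
have J0 : J != set0 by case: hJ.
case: (exists_min (fun j => v j / u j) J0) => k kJ kmin.
set m := v k / u k.
have [mpos|mle] := ltP 0 m.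
  left => j jJ; have := kmin j jJ; rewrite -/m => h.
  have := hu j jJ => uj.
  have : 0 < v j / u j by apply: lt_le_trans h.
  by rewrite pmulr_lgt0 ?invr_gt0.
right.
have wge : forall j, j \in J -> 0 <= 1 * v j + (- m) * u j.
  move=> j jJ; have := kmin j jJ; rewrite -/m => h.
  have uj := hu j jJ.
  by rewrite mul1r mulNr subr_ge0 -ler_pdivlMr.
have wk : 1 * v k + (- m) * u k = 0.
  by rewrite /m mul1r mulNr divfK ?subrr // gt_eqF ?hu.
have Sw : forall i, i \in J -> 0 <= SS J (fun j => 1 * v j + (- m) * u j) i.
  move=> i iJ; rewrite SS_lin; have := hSv i iJ; have := hSu i iJ.
  move: (SS J u i) (SS J v i) => a b h1 h2; nra.
have w0 := Zlemma hJ wge Sw kJ wk.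
have vm : forall j, j \in J -> v j = m * u j.
  by move=> j /w0; rewrite mul1r mulNr => /eqP; rewrite subr_eq0 => /eqP.
have SSv : SS J v k = m * SS J u k.
  by rewrite /SS mulr_sumr; apply: eq_bigr => j jJ; rewrite vm //; ring.
have m0 : m = 0.
  have := hSv k kJ; have := hSu k kJ; rewrite SSv.
  move: (SS J u k) => a h1 h2; apply/le_anti; rewrite mle /=.
  by rewrite -(pmulr_lge0 _ h1).
by move=> j jJ; rewrite vm // m0 mul0r.
Qed.


Lemma det_clause (J : {set 'I_n}) : is_component C J ->
  (forall v : 'I_n -> F, (forall i, i \in J -> 0 <= SS J v i) ->
     (forall j, j \in J -> 0 < v j) \/ (forall j, j \in J -> v j = 0)) ->
  \det (\matrix_(k < #|J|, l < #|J|) ((C (enum_val k) (enum_val l))%:~R : F)) != 0.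
Proof.
move=> hJ cl3; have J0 : J != set0 by case: hJ.
case/set0Pn: J0 => x0 x0J.
set M := \matrix_(k < #|J|, l < #|J|) _.
rewrite -det_tr; apply/negP => /det0P [v vn0 vM].
pose w x := if x \in J then v 0 (@enum_rank_in _ x0 J x0J x) else 0.
have wval : forall l : 'I_#|J|, w (enum_val l) = v 0 l.
  by move=> l; rewrite /w enum_valP enum_valK_in.
have SS0 : forall i, i \in J -> SS J w i = 0.
  move=> i iJ; rewrite /SS (big_enum_val (fun x => cr i x * w x)) /=.
  have := congr1 (fun A : 'M[F]_(1, #|J|) => A 0 (@enum_rank_in _ x0 J x0J i)) vM; rewrite !mxE => E.
  apply: (etrans _ E); apply: eq_bigr => l _.
  by rewrite wval !mxE enum_rankK_in // mulrC.
case: (cl3 w) => [i iJ|wpos|wz]; first by rewrite SS0.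
  case: (cl3 (fun x => - w x)) => [i iJ|npos|nz].
  - have -> : SS J (fun x => - w x) i = - 1 * SS J w i + 0 * SS J w i.
      by rewrite -SS_lin; apply: eq_bigr => j _; ring.
    by rewrite SS0 // mulr0 mul0r addr0.
  - by have := npos x0 x0J; have := wpos x0 x0J; lra.
  - by have := nz x0 x0J; have := wpos x0 x0J; lra.
move/negP: vn0; apply; apply/eqP/rowP => l; rewrite mxE -wval.
exact: wz (enum_valP l).
Qed.

End Real.
Section Comp.
Variable n : nat.
Variable C : 'M[int]_n.
Hypothesis hC : is_GCM C.

Definition ce : rel 'I_n := fun i j => C i j != 0.

Lemma ce_sym : symmetric ce.
Proof.
move=> i j; rewrite /ce; case: hC => _ [_ h].
by apply/idP/idP; apply: contra => /eqP /h ->.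
Qed.

Lemma ce_csym : connect_sym ce.
Proof. exact: sym_connect_sym ce_sym. Qed.

Definition comp k : {set 'I_n} := [set j | connect ce k j].

Lemma comp_self k : k \in comp k.
Proof. by rewrite inE connect0. Qed.

Lemma comp_out k i j : i \in comp k -> C i j != 0 -> j \in comp k.
Proof.
rewrite !inE => ki cij; apply: connect_trans ki _; exact: connect1.
Qed.

Lemma comp_same i j : j \in comp i -> comp j = comp i.
Proof.
rewrite inE => ij; apply/setP => x; rewrite !inE.
apply/idP/idP => h; first exact: connect_trans ij h.
by rewrite ce_csym in ij; apply: connect_trans ij h.
Qed.

Lemma comp_is_component k : is_component C (comp k).
Proof.
split.
- by apply/set0Pn; exists k; apply: comp_self.
- move=> i j ik; apply: contraNeq => cij; exact: comp_out ik cij.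
move=> K KJ K0 KN.
case: (boolP [exists i, exists j, [&& i \in K, j \in comp k, j \notin K & C i j != 0]]).
  by case/existsP => i /existsP [j /and4P [? ? ? ?]]; exists i, j.
move=> /negP Hno; exfalso.
have clK : closed ce K.
  have half : forall x y, ce x y -> x \in K -> y \in K.
    move=> x y exy xK; apply/negPn/negP => yK; apply: Hno.
    apply/existsP; exists x; apply/existsP; exists y.
    rewrite xK yK /=; apply/andP; split => //; apply: comp_out exy.
    exact: (subsetP KJ).
  move=> x y exy; apply/idP/idP; first exact: half.
  by apply: half; rewrite ce_sym.
case/set0Pn: K0 => x0 x0K.
have : ~~ (comp k \subset K).
  by apply: contra KN => sub; rewrite eqEsubset KJ sub.
case/subsetPn => y0 y0J y0K.
have x0J := subsetP KJ x0 x0K.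
have : connect ce x0 y0.
  move: x0J y0J; rewrite !inE => h1 h2; rewrite ce_csym in h1; exact: connect_trans h1 h2.
move/(closed_connect clK); rewrite x0K => /esym; by rewrite (negbTE y0K).
Qed.

End Comp.
Section Symm.
Variable n : nat.
Variable C : 'M[int]_n.
Hypothesis hC : is_GCM C.
Variable F : realFieldType.
Local Notation cr := (@cr n C F).
Local Notation SS := (@SS n C F).

Lemma cr_le_m1 i j : i != j -> C i j != 0 -> cr i j <= -1.
Proof.
move=> ij cij; have h : C i j <= 0 by case: hC => _ [h _]; apply: h.
have h2 : C i j <= -1 by move: h cij; lia.
by rewrite /cr -(ler_int F) in h2.
Qed.

Lemma SS_D1 (S : {set 'I_n}) u i l : l \in S ->
  SS S u i = cr i l * u l + SS (S :\ l) u i.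
Proof.
move=> lS; rewrite /SS (bigD1 l) //=; congr (_ + _).
by apply: eq_bigl => j; rewrite !inE andbC.
Qed.

Lemma leaf (S : {set 'I_n}) (u : 'I_n -> F) : S != set0 ->
  (forall j, j \in S -> 0 < u j) -> (forall i, i \in S -> 0 < SS S u i) ->
  exists2 l, l \in S & forall j1 j2, j1 \in S -> j2 \in S -> j1 != l -> j2 != l ->
     C l j1 != 0 -> C l j2 != 0 -> j1 = j2.
Proof.
move=> S0 hu hSu.
case: (boolP [exists l in S, forall j1 in S, forall j2 in S,
   (j1 != l) ==> (j2 != l) ==> (C l j1 != 0) ==> (C l j2 != 0) ==> (j1 == j2)]).
  case/existsP => l /andP [lS /forallP H]; exists l => // j1 j2 j1S j2S n1 n2 c1 c2.
  move: (H j1); rewrite j1S /= => /forallP /(_ j2); rewrite j2S n1 n2 c1 c2 /=.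
  by move/eqP.
move=> Hno; exfalso.
apply: (@no_pos_sub n C hC F S u (fun _ => 1) S0 hu hSu); first by move=> *; apply: ltr01.
move=> l lS.
move/exists_inPn: Hno => /(_ l lS) /forall_inPn [j1 j1S] /forall_inPn [j2 j2S].
rewrite !negb_imply => /andP [n1 /andP [n2 /andP [c1 /andP [c2 ne]]]].
have j1S' : j1 \in S :\ l by rewrite !inE n1 j1S.
have j2S' : j2 \in S :\ l :\ j1 by rewrite !inE eq_sym ne n2 j2S.
rewrite (SS_D1 _ _ lS) (SS_D1 _ _ j1S') (SS_D1 _ _ j2S') cr_diag //.
have h1' : cr l j1 <= -1 by apply: cr_le_m1; rewrite // eq_sym.
have h2' : cr l j2 <= -1 by apply: cr_le_m1; rewrite // eq_sym.
have h3 : SS (S :\ l :\ j1 :\ j2) (fun _ => 1) l <= 0.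
  apply: sumr_le0 => j; rewrite !inE => /and4P [_ _ jl _].
  by rewrite mulr1 cr_off // eq_sym.
rewrite !mulr1; lra.
Qed.


Lemma C_sym0 i j : C i j = 0 -> C j i = 0.
Proof. by case: hC => _ [_ h]; apply: h. Qed.

Lemma cr_sym0 i j : C i j = 0 -> cr i j = 0 /\ cr j i = 0.
Proof. by move=> h; rewrite /cr h (C_sym0 h). Qed.

Lemma symmetrize m : forall (S : {set 'I_n}) (u : 'I_n -> F), (#|S| <= m)%N ->
  (forall j, j \in S -> 0 < u j) -> (forall i, i \in S -> 0 < SS S u i) ->
  exists d : 'I_n -> F, (forall j, 0 < d j) /\
    (forall i j, i \in S -> j \in S -> d i * cr i j = d j * cr j i).
Proof.
elim: m => [|m IH] S u hS hu hSu.
  exists (fun _ => 1); split => [j|i j]; first exact: ltr01.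
  by move: hS; rewrite leqn0 => /eqP/cards0_eq ->; rewrite inE.
case: (eqVneq S set0) => [->|S0].
  by exists (fun _ => 1); split => [j|i j]; [exact: ltr01|rewrite inE].
case: (leaf S0 hu hSu) => l lS hleaf.
set S' := S :\ l.
have hS' : (#|S'| <= m)%N by move: hS; rewrite /S' (cardsD1 l S) lS.
have hu' : forall j, j \in S' -> 0 < u j by move=> j; rewrite !inE => /andP [_ /hu].
have hSu' : forall i, i \in S' -> 0 < SS S' u i.
  move=> i; rewrite !inE => /andP [il iS].
  have := hSu i iS; rewrite (SS_D1 _ _ lS).
  have : cr i l * u l <= 0 by rewrite mulr_le0_ge0 ?cr_off // ltW ?hu.
  lra.
case: (IH S' u hS' hu' hSu') => d' [d'pos d'sym].
have key : forall d : 'I_n -> F, (forall j, j != l -> d j = d' j) ->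
   (forall j, j \in S' -> d l * cr l j = d j * cr j l) ->
   forall i j, i \in S -> j \in S -> d i * cr i j = d j * cr j i.
  move=> d dd dl i j iS jS.
  case: (eqVneq i l) => [->|il]; case: (eqVneq j l) => [->|jl] //.
  - by apply: dl; rewrite !inE jl.
  - by rewrite (dl i) ?inE ?il.
  - by rewrite !dd // d'sym // !inE ?il ?jl.
case: (boolP [exists j0 in S', C l j0 != 0]).
  case/exists_inP => j0 j0S' c0.
  have j0l : j0 != l by move: j0S'; rewrite !inE => /andP [].
  have j0S : j0 \in S by move: j0S'; rewrite !inE => /andP [].
  have c0' : C j0 l != 0 by apply: contra c0 => /eqP/C_sym0 ->.
  have n1 : cr l j0 < 0.
    by rewrite lt_neqAle cr_off 1?eq_sym // andbT eq_sym cr_eq0.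
  have n2 : cr j0 l < 0.
    by rewrite lt_neqAle cr_off // andbT cr_eq0.
  pose d k := if k == l then d' j0 * cr j0 l / cr l j0 else d' k.
  exists d; split.
    move=> j; rewrite /d; case: (j == l); last exact: d'pos.
    by rewrite -mulrA mulr_gt0 ?d'pos // nmulr_rgt0 // invr_lt0.
  apply: key => [j /negbTE jl|j jS']; first by rewrite /d jl.
  have jl : j != l by move: jS'; rewrite !inE => /andP [].
  have jS : j \in S by move: jS'; rewrite !inE => /andP [].
  rewrite /d eqxx (negbTE jl).
  case: (eqVneq j j0) => [->|jj0].
    by rewrite divfK // lt_eqF.
  have Clj : C l j = 0.
    apply/eqP; apply: contraNT jj0 => clj; apply/eqP.
    exact: (hleaf j j0 jS j0S jl j0l clj c0).
  by case: (cr_sym0 Clj) => -> ->; rewrite !mulr0.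
move=> /exists_inPn Hno.
exists d'; split => //.
apply: key => // j jS'.
have : C l j = 0 by apply/eqP; move: (Hno j jS'); rewrite negbK.
by case/cr_sym0 => -> ->; rewrite !mulr0.
Qed.

End Symm.
Section Quad.
Variable n : nat.
Variable C : 'M[int]_n.
Hypothesis hC : is_GCM C.
Variable F : realFieldType.
Local Notation cr := (@cr n C F).
Variable d : 'I_n -> F.
Hypothesis dpos : forall j, 0 < d j.
Hypothesis dsym : forall i j, d i * cr i j = d j * cr j i.

Definition bil (x y : 'I_n -> F) := \sum_i \sum_j d i * cr i j * x i * y j.

Lemma bil_ext x x' y y' : (forall i, x i = x' i) -> (forall i, y i = y' i) ->
  bil x y = bil x' y'.
Proof.
by move=> hx hy; apply: eq_bigr => i _; apply: eq_bigr => j _; rewrite hx hy.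
Qed.

Lemma sum_ind (f : 'I_n -> F) k : \sum_i f i * (i == k)%:R = f k.
Proof.
rewrite (bigD1 k) //= eqxx mulr1 big1 ?addr0 // => i /negbTE ->; by rewrite mulr0.
Qed.

Lemma bil_alt x y : bil x y = \sum_i x i * (d i * \sum_j cr i j * y j).
Proof.
apply: eq_bigr => i _; rewrite !mulr_sumr; apply: eq_bigr => j _; ring.
Qed.

Lemma bil_alt2 x y : bil x y = \sum_j y j * (d j * \sum_i cr j i * x i).
Proof.
rewrite /bil exchange_big /=; apply: eq_bigr => j _; rewrite !mulr_sumr.
apply: eq_bigr => i _; have := dsym i j => h.
by rewrite h; ring.
Qed.

Lemma bil_sub_l x a y : bil (fun i => x i - a i) y = bil x y - bil a y.
Proof.
rewrite /bil -sumrB; apply: eq_bigr => i _; rewrite -sumrB.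
by apply: eq_bigr => j _; ring.
Qed.

Lemma bil_sub_r x y a : bil x (fun i => y i - a i) = bil x y - bil x a.
Proof.
rewrite /bil -sumrB; apply: eq_bigr => i _; rewrite -sumrB.
by apply: eq_bigr => j _; ring.
Qed.

Lemma bil_e_l (t : F) k y : bil (fun i => t * (i == k)%:R) y = t * d k * \sum_j cr k j * y j.
Proof.
rewrite bil_alt.
have -> : t * d k * \sum_j cr k j * y j = t * (d k * \sum_j cr k j * y j) by ring.
rewrite -(sum_ind (fun i => t * (d i * \sum_j cr i j * y j)) k).
by apply: eq_bigr => i _; ring.
Qed.

Lemma bil_e_r (t : F) k x : bil x (fun i => t * (i == k)%:R) = t * d k * \sum_j cr k j * x j.
Proof.
rewrite bil_alt2.
have -> : t * d k * \sum_j cr k j * x j = t * (d k * \sum_j cr k j * x j) by ring.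
rewrite -(sum_ind (fun i => t * (d i * \sum_j cr i j * x j)) k).
by apply: eq_bigr => i _; ring.
Qed.

Lemma Q_reflect x k y : let t := \sum_j cr k j * x j in
  (forall i, y i = x i - t * (i == k)%:R) -> bil y y = bil x x.
Proof.
move=> t hy; rewrite (bil_ext hy hy).
rewrite bil_sub_l !bil_sub_r bil_e_r bil_e_l bil_e_l -/t.
have -> : \sum_j cr k j * (t * (j == k)%:R) = cr k k * t.
  rewrite -(sum_ind (fun j => cr k j * t) k); apply: eq_bigr => j _; ring.
rewrite (cr_diag hC); ring.
Qed.

Lemma bil_alpha k : bil (fun i => (i == k)%:R) (fun i => (i == k)%:R) = 2 * d k.
Proof.
rewrite (bil_ext (x' := fun i => 1 * (i == k)%:R) (y' := fun i => 1 * (i == k)%:R));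
  try by move=> i; rewrite mul1r.
rewrite bil_e_l.
have -> : \sum_j cr k j * (1 * (j == k)%:R) = cr k k.
  by rewrite -[RHS](sum_ind (fun j => cr k j) k); apply: eq_bigr => j _; rewrite mul1r.
by rewrite (cr_diag hC) mul1r mulrC.
Qed.

Variable u : 'I_n -> F.
Hypothesis upos : forall i, 0 < u i.
Hypothesis uC : forall i, 0 < \sum_j cr i j * u j.

Lemma Q_lower x k :
  d k * (\sum_j cr k j * u j) * u k * (x k / u k) ^+ 2 <= bil x x.
Proof.
set y := fun i => x i / u i.
have xy : forall i, x i = u i * y i by move=> i; rewrite /y mulrC divfK // gt_eqF.
set T1 := \sum_i d i * (\sum_j cr i j * u j) * u i * y i ^+ 2.
set T4 := \sum_i \sum_j d i * cr i j * u i * u j * (y i - y j) ^+ 2.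
have E : T4 = 2 * T1 - 2 * bil x x.
  have e1 : T4 = \sum_i \sum_j ((d i * cr i j * u i * u j * y i ^+ 2 +
              d j * cr j i * u j * u i * y j ^+ 2) - 2 * (d i * cr i j * x i * x j)).
    apply: eq_bigr => i _; apply: eq_bigr => j _.
    rewrite (xy i) (xy j) -(dsym i j); ring.
  rewrite e1.
  rewrite (eq_bigr (fun i => \sum_j d i * cr i j * u i * u j * y i ^+ 2 +
      \sum_j d j * cr j i * u j * u i * y j ^+ 2 - \sum_j 2 * (d i * cr i j * x i * x j)));
    last by move=> i _; rewrite sumrB big_split.
  rewrite sumrB big_split /=.
  rewrite [X in _ + X - _]exchange_big /=.
  have e2 : \sum_i \sum_j d i * cr i j * u i * u j * y i ^+ 2 = T1.
    rewrite /T1; apply: eq_bigr => i _; rewrite mulr_sumr !mulr_suml; apply: eq_bigr => j _; ring.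
  have e3 : \sum_j \sum_i d j * cr j i * u j * u i * y j ^+ 2 = T1.
    rewrite /T1; apply: eq_bigr => i _; rewrite mulr_sumr !mulr_suml; apply: eq_bigr => j _; ring.
  rewrite e2 /bil.
  have e4 : \sum_i \sum_j 2 * (d i * cr i j * x i * x j) =
            2 * \sum_i \sum_j d i * cr i j * x i * x j.
    by rewrite mulr_sumr; apply: eq_bigr => i _; rewrite mulr_sumr.
  rewrite e4; ring.
have T4le : T4 <= 0.
  apply: sumr_le0 => i _; apply: sumr_le0 => j _.
  case: (eqVneq i j) => [->|ij]; first by rewrite subrr expr0n /= mulr0.
  apply: mulr_le0_ge0; last exact: sqr_ge0.
  apply: mulr_le0_ge0; last exact: ltW.
  apply: mulr_le0_ge0; last exact: ltW.
  by apply: mulr_ge0_le0; [apply: ltW|apply: (cr_off hC)].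
have T1ge : d k * (\sum_j cr k j * u j) * u k * y k ^+ 2 <= T1.
  rewrite /T1 [X in _ <= X](bigD1 k) //= lerDl; apply: sumr_ge0 => i _.
  apply: mulr_ge0; last exact: sqr_ge0.
  by apply: mulr_ge0; [apply: mulr_ge0|]; apply: ltW.
rewrite -[x k / u k]/(y k).
lra.
Qed.

End Quad.
Local Notation RR := Rdefinitions.R.

Definition pdec (P : Prop) : bool := if excluded_middle_informative P then true else false.
Lemma pdecP (P : Prop) : pdec P <-> P.
Proof. by rewrite /pdec; case: excluded_middle_informative. Qed.

Section Main.
Variable n : nat.
Hypothesis hn : (0 < n)%N.
Variable C : 'M[int]_n.
Hypothesis hC : is_GCM C.
Variables (A : Type) (rho : 'I_n -> A -> A) (Cs : A -> 'M[int]_n).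
Hypothesis hsch : is_cartan_scheme rho Cs.
Hypothesis hCa : forall a, Cs a = C.
Variable R : A -> 'cV[int]_n -> Prop.
Hypothesis hR : is_root_system rho Cs R.

Local Notation Phi := (Phi C).

Lemma alpha_coord (i k : 'I_n) : alpha i k ord0 = (k == i)%:R :> int.
Proof. by rewrite /alpha mxE eqxx andbT. Qed.

Lemma sum_comp_gen (F : realFieldType) (J : {set 'I_n}) (v : 'I_n -> F) i :
  is_component C J -> i \in J ->
  \sum_(j in J) (@cr n C F) i j * v j = \sum_j (@cr n C F) i j * v j.
Proof.
move=> [_ hout _] iJ; rewrite [RHS](bigID (fun j => j \in J)) /= [X in _ + X]big1 ?addr0 //.
by move=> j jJ; rewrite /cr hout // mulr0z mul0r.
Qed.

Lemma Phi_sigma i v : Phi v -> Phi (sigma C i *m v).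
Proof.
case=> w [j ->]; exists (w ++ [:: i]), j.
by rewrite Pw_cat /= mul1mx mulmxA.
Qed.

Lemma sigma_alpha i : sigma C i *m alpha i = - alpha i.
Proof.
rewrite sigma_vec.
have -> : \sum_j C i j * alpha i j 0 = 2.
  rewrite (bigD1 i) //= big1 ?addr0; last by move=> j /negbTE ji; rewrite alpha_coord ji mulr0.
  by rewrite alpha_coord eqxx mulr1 hC.1.
by rewrite scaler_nat mulr2n opprD addrA subrr add0r.
Qed.

Lemma Phi_opp v : Phi v -> Phi (- v).
Proof.
case=> w [j ->]; exists (j :: w), j.
by rewrite /= -mulmxA sigma_alpha mulmxN.
Qed.

Lemma R_ne0 a v : R a v -> v != 0.
Proof.
have i : 'I_n := Ordinal hn.
move=> Hv; apply/eqP => v0; subst v.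
case: (R_mult hR (i := i) (k := 0) Hv); first by rewrite scale0r.
  move/matrixP/(_ i 0); rewrite !mxE eqxx; by [].
move/matrixP/(_ i 0); rewrite !mxE eqxx; by [].
Qed.

Definition ht (v : 'cV[int]_n) := \sum_k v k 0.

Lemma ht_sigma i v : ht (sigma C i *m v) = ht v - \sum_j C i j * v j 0.
Proof.
rewrite /ht sigma_vec.
rewrite (eq_bigr (fun k => v k 0 - (\sum_j C i j * v j 0) * (k == i)%:R)); last first.
  by move=> k _; rewrite !mxE eqxx andbT.
rewrite sumrB; congr (_ - _).
set t := \sum_j C i j * v j 0.
rewrite (bigD1 i) //= eqxx mulr1 big1 ?addr0 //.
by move=> k /negbTE ->; rewrite mulr0.
Qed.

Lemma ht_ge0 v : nonneg_vec v -> 0 <= ht v.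
Proof. by move=> h; apply: sumr_ge0 => k _. Qed.


Lemma intr_sum (F : pzRingType) (I : Type) (r : seq I) (P : pred I) (f : I -> int) :
  ((\sum_(i <- r | P i) f i)%:~R : F) = \sum_(i <- r | P i) (f i)%:~R.
Proof. exact: (big_morph _ (@intrD F) (mulr0z 1)). Qed.

Section FT.
Hypothesis hfin : finite_type C.

Lemma pos_coord (b : 'cV[int]_n) : nonneg_vec b -> b != 0 ->
  exists i, 0 < \sum_j C i j * b j 0.
Proof.
move=> hnn hb0.
case: (boolP [exists i, 0 < \sum_j C i j * b j 0]) => [/existsP [i hi]|]; first by exists i.
move/existsPn => hall; exfalso.
have [k hk] : exists k, b k 0 != 0.
  case: (boolP [exists k, b k 0 != 0]) => [/existsP [k hk]|/existsPn h]; first by exists k.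
  exfalso; apply: (negP hb0); apply/eqP/matrixP => x y; rewrite (ord1 y) mxE.
  by apply/eqP; move: (h x); rewrite negbK.
have hJ := comp_is_component hC k.
case: (hfin hJ) => _ _ cl3.
case: (cl3 (fun j => - (b j 0)%:~R)).
- move=> i iJ.
  have := sum_comp_gen (F := RR) (fun j => - (b j 0)%:~R) hJ iJ; rewrite /cr => ->.
  have -> : \sum_j (C i j)%:~R * - ((b j 0)%:~R : RR) = - ((\sum_j C i j * b j 0)%:~R).
    by rewrite intr_sum -sumrN; apply: eq_bigr => j _; rewrite intrM mulrN.
  by rewrite oppr_ge0 lerz0 leNgt hall.
- move=> h; have := h k (comp_self C k); have := hnn k.
  by rewrite oppr_gt0 ltrz0 => h1 h2; move: h1; rewrite leNgt h2.
- move=> h; have := h k (comp_self C k) => /eqP; rewrite oppr_eq0 intr_eq0.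
  by rewrite (negbTE hk).
Qed.


Lemma box_finite (N : nat) (P : 'cV[int]_n -> Prop) :
  (forall v, P v -> forall k, `|v k 0| < N%:Z) -> finite_set P.
Proof.
move=> hP.
pose box := [seq (\col_k (((f : {ffun 'I_n -> 'I_(N + N).+1}) k : nat)%:Z - N%:Z) : 'cV[int]_n) | f <- enum {ffun 'I_n -> 'I_(N + N).+1}].
exists [seq v <- box | pdec (P v)] => v; rewrite mem_filter; split.
  move=> Pv; apply/andP; split; first by apply/pdecP.
  apply/mapP; exists [ffun k => inord (absz (v k ord0 + N%:Z)%R)]; first by rewrite mem_enum.
  apply/matrixP => k y; rewrite (ord1 y) !mxE ffunE inordK.
    have := hP v Pv k; move: (v k 0) => x; lia.
  have := hP v Pv k; move: (v k 0) => x; lia.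
by case/andP => /pdecP.
Qed.

Lemma sigma_coord i (v : 'cV[int]_n) k :
  (sigma C i *m v) k 0 = v k 0 - (\sum_j C i j * v j 0) * (k == i)%:R.
Proof. by rewrite sigma_vec !mxE eqxx andbT. Qed.

Lemma descent_step a b : R a b -> nonneg_vec b -> (forall i, b != alpha i) ->
  exists i, [/\ R (rho i a) (sigma C i *m b), nonneg_vec (sigma C i *m b) &
             ht (sigma C i *m b) < ht b].
Proof.
move=> Hb hnn hna.
have b0 := R_ne0 Hb.
case: (pos_coord hnn b0) => i hi.
exists i; split.
- exact: (R_sigma hCa hR i Hb).
- case: (boolP [exists j, (j != i) && (b j 0 != 0)]).
    case/existsP => j /andP [ji bj].
    case: (R_R1 hR (R_sigma hCa hR i Hb)) => // hneg; exfalso.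
    have := hneg j; rewrite mxE sigma_coord (negbTE ji) mulr0 subr0.
    have := hnn j; move: bj; move: (b j 0) => x; lia.
  move/existsPn => hz.
  have bE : b = b i 0 *: alpha i.
    apply/matrixP => k y; rewrite (ord1 y) !mxE eqxx andbT.
    case: (eqVneq k i) => [->|ki]; first by rewrite mulr1.
    by move: (hz k); rewrite ki /= negbK => /eqP ->; rewrite mulr0.
  case: (R_mult hR Hb bE) => hb; first by move: (hna i); rewrite hb eqxx.
  have := hnn i; rewrite hb !mxE eqxx; by [].
- rewrite ht_sigma; move: hi; move: (ht b) (\sum_j _) => x y; lia.
Qed.

Lemma descent N : forall a b, R a b -> nonneg_vec b -> ht b <= N%:Z -> Phi b.
Proof.
elim: N => [|N IH] a b Hb hnn hN.
  case: (boolP [exists i, b == alpha i]).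
    by case/existsP => i /eqP ->; exists [::], i; rewrite /= mul1mx.
  move/existsPn => hna; exfalso.
  case: (descent_step Hb hnn hna) => i [_ hnn' hlt].
  have := ht_ge0 hnn'; move: hlt hN; move: (ht b) (ht _) => x y; lia.
case: (boolP [exists i, b == alpha i]).
  by case/existsP => i /eqP ->; exists [::], i; rewrite /= mul1mx.
move/existsPn => hna.
case: (descent_step Hb hnn hna) => i [Hb' hnn' hlt].
have : Phi (sigma C i *m b) by apply: (IH _ _ Hb' hnn'); move: hlt hN; move: (ht b) (ht _) => x y; lia.
by move/(Phi_sigma i); rewrite mulmxA sigma_invol // mul1mx.
Qed.

Lemma R_Phi a v : R a v -> Phi v.
Proof.
case: hR => R1 _ _ _ /R1 [[Hv hnn]|[u [Hu [hnn ->]]]].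
  by apply: (descent (N := `|ht v|%N) Hv hnn); rewrite abszE ler_norm.
apply: Phi_opp => //.
by apply: (descent (N := `|ht u|%N) Hu hnn); rewrite abszE ler_norm.
Qed.


Definition vec (v : 'cV[int]_n) : 'I_n -> RR := fun k => (v k 0)%:~R.

Definition cl2 (J : {set 'I_n}) (u : 'I_n -> RR) :=
  (forall j, j \in J -> 0 < u j) /\ (forall i, i \in J -> 0 < \sum_(j in J) (C i j)%:~R * u j).

Lemma ex_impl (J : {set 'I_n}) : exists u : 'I_n -> RR, (exists u', cl2 J u') -> cl2 J u.
Proof.
case: (excluded_middle_informative (exists u', cl2 J u')) => [[u h]|h].
  by exists u.
by exists (fun _ => 0) => h'; case: (h h').
Qed.

Definition uset (J : {set 'I_n}) : 'I_n -> RR :=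
  proj1_sig (constructive_indefinite_description _ (ex_impl J)).

Lemma uset_spec k : cl2 (comp C k) (uset (comp C k)).
Proof.
apply: (proj2_sig (constructive_indefinite_description _ (ex_impl _))); case: (hfin (comp_is_component hC k)) => _ [u [h1 h2]] _.
by exists u.
Qed.

Definition ug k := uset (comp C k) k.

Lemma ug_pos k : 0 < ug k.
Proof. by case: (uset_spec k) => h _; apply: h; apply: comp_self. Qed.

Lemma ug_C i : 0 < \sum_j cr C RR i j * ug j.
Proof.
have ii := comp_self C i.
rewrite (eq_bigr (fun j => cr C RR i j * uset (comp C i) j)); last first.
  move=> j _; case: (eqVneq (C i j) 0) => [c0|c0]; first by rewrite /cr c0 !mul0r.
  by rewrite /ug (comp_same hC (comp_out ii c0)).
rewrite -(sum_comp_gen _ (comp_is_component hC i) ii).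
by case: (uset_spec i) => _ h; apply: h.
Qed.

Lemma d_exists : exists d : 'I_n -> RR, (forall j, 0 < d j) /\
  (forall i j, d i * cr C RR i j = d j * cr C RR j i).
Proof.
have h1 : (#|[set: 'I_n]| <= n)%N by rewrite cardsT card_ord.
have h2 : forall j, j \in [set: 'I_n] -> 0 < ug j by move=> j _; apply: ug_pos.
have h3 : forall i, i \in [set: 'I_n] -> 0 < SS C setT ug i.
  move=> i _; rewrite /SS (eq_bigl (fun j => true)) ?ug_C // => j; by rewrite inE.
have := @symmetrize n C hC RR n setT ug h1 h2 h3.
case=> d [dpos dsym]; exists d; split => // i j; by apply: dsym; rewrite inE.
Qed.

Lemma vec_sigma i v k : vec (sigma C i *m v) k =
  vec v k - (\sum_j cr C RR i j * vec v j) * (k == i)%:R.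
Proof.
rewrite /vec sigma_coord intrB intrM intr_sum; congr (_ - _ * _).
  by apply: eq_bigr => j _; rewrite intrM.
by case: (k == i).
Qed.

Lemma finite_of_ft a : finite_set (R a).
Proof.
case: d_exists => d [dpos dsym].
have Q_Pw : forall w v, bil C d (vec (Pw C w *m v)) (vec (Pw C w *m v)) = bil C d (vec v) (vec v).
  elim=> [|i w IH] v; first by rewrite /= mul1mx.
  rewrite /= -mulmxA IH; apply: (Q_reflect hC dsym) => k; exact: vec_sigma.
set D := \sum_j 2 * d j.
have QD : forall v, Phi v -> bil C d (vec v) (vec v) <= D.
  move=> v [w [j ->]]; rewrite Q_Pw.
  rewrite (bil_ext C d (x' := fun i => (i == j)%:R) (y' := fun i => (i == j)%:R)); try by move=> i; rewrite /vec !mxE eqxx andbT; case: (i == j).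
  rewrite bil_alpha // /D (bigD1 j) //= lerDl; apply: sumr_ge0 => i _.
  by rewrite mulr_ge0 // ltW.
set c := fun k => d k * (\sum_j cr C RR k j * ug j) / ug k.
have cpos : forall k, 0 < c k.
  by move=> k; rewrite /c !mulr_gt0 ?dpos ?ug_C // invr_gt0 ug_pos.
set K := \sum_k D / c k.
have D0 : 0 <= D by apply: sumr_ge0 => i _; rewrite mulr_ge0 // ltW.
have K0 : 0 <= K by apply: sumr_ge0 => k _; rewrite divr_ge0 // ltW.
have [N hN] : exists N : nat, K < N%:R by exists (Num.bound K); apply: archi_boundP.
apply: (@box_finite N) => v /R_Phi Pv k.
have h1 := Q_lower hC dpos dsym ug_pos ug_C (vec v) k.
have h2 := QD v Pv.
have h3 : vec v k ^+ 2 * c k <= D.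
  apply: le_trans h2; apply: le_trans h1; rewrite le_eqVlt; apply/orP; left; apply/eqP.
  by rewrite /c; field; rewrite gt_eqF ?ug_pos.
have h4 : vec v k ^+ 2 <= K.
  apply: le_trans (_ : D / c k <= K).
    by rewrite ler_pdivlMr.
  rewrite /K (bigD1 k) //= lerDl; apply: sumr_ge0 => i _; apply: divr_ge0 => //; exact: ltW.
have h5 : (v k 0 ^+ 2 < N%:Z).
  rewrite -(ltr_int RR) expr2 intrM -expr2 -/(vec v k).
  exact: le_lt_trans h4 hN.
move: h5; move: (v k 0) => x; nia.
Qed.
End FT.

Lemma nonneg_sigma a a' i v : R a v -> nonneg_vec v -> v != alpha i ->
  R a' (sigma C i *m v) -> nonneg_vec (sigma C i *m v).
Proof.
move=> Hv hnn hna Hs.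
case: (boolP [exists j, (j != i) && (v j 0 != 0)]).
  case/existsP => j /andP [ji bj].
  case: (R_R1 hR Hs) => // hneg; exfalso.
  have := hneg j; rewrite mxE sigma_coord (negbTE ji) mulr0 subr0.
  have := hnn j; move: bj; move: (v j 0) => x; lia.
move/existsPn => hz.
have bE : v = v i 0 *: alpha i.
  apply/matrixP => k y; rewrite (ord1 y) !mxE eqxx andbT.
  case: (eqVneq k i) => [->|ki]; first by rewrite mulr1.
  by move: (hz k); rewrite ki /= negbK => /eqP ->; rewrite mulr0.
case: (R_mult hR Hv bE) => hb; first by move: hna; rewrite hb eqxx.
by have := hnn i; rewrite hb !mxE eqxx.
Qed.

Lemma nonneg_alpha (i : 'I_n) : nonneg_vec (alpha i).
Proof. by move=> k; rewrite alpha_coord; case: (k == i). Qed.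

Lemma not_nonneg_neg_alpha (i : 'I_n) : ~ nonneg_vec (- alpha i).
Proof. by move=> h; have := h i; rewrite mxE alpha_coord eqxx. Qed.

Lemma ft_of_finite a0 : finite_set (R a0) -> finite_type C.
Proof.
case=> s hs.
pose P := [seq v <- undup s | pdec (Phi v /\ nonneg_vec v)].
have Pu : uniq P by rewrite filter_uniq // undup_uniq.
have memP : forall v, v \in P <-> Phi v /\ nonneg_vec v.
  move=> v; rewrite mem_filter mem_undup; split.
    by case/andP => /pdecP.
  move=> h; apply/andP; split; first exact/pdecP.
  by apply/hs; apply: (Phi_R hsch hCa hR a0); case: h.
have alphaP : forall i, alpha i \in P.
  by move=> i; apply/memP; split; [exists [::], i; rewrite /= mul1mx|apply: nonneg_alpha].
have sigP : forall i v, v \in P -> v != alpha i ->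
    (sigma C i *m v \in P) && (sigma C i *m v != alpha i).
  move=> i v /memP [Pv hnn] hna; apply/andP; split.
    apply/memP; split; first exact: Phi_sigma.
    apply: (nonneg_sigma (a := a0) (a' := a0)) => //; apply: (Phi_R hsch hCa hR a0) => //.
    exact: Phi_sigma.
  apply/eqP => E; have : v = - alpha i.
    by rewrite -[v]mul1mx -(sigma_invol hC i) -mulmxA E sigma_alpha.
  by move=> vE; apply: (@not_nonneg_neg_alpha i); rewrite -vE.
set delta := \sum_(v <- P) v.
have key : forall i, \sum_j C i j * delta j 0 = 2.
  move=> i.
  have E1 : delta = alpha i + \sum_(v <- rem (alpha i) P) v by rewrite /delta (big_rem _ (alphaP i)).
  have E2 : sigma C i *m delta = - alpha i + \sum_(v <- rem (alpha i) P) v.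
    rewrite /delta mulmx_sumr (big_rem _ (alphaP i)) /= sigma_alpha; congr (_ + _).
    rewrite -(big_map (fun v => sigma C i *m v) xpredT id).
    apply: perm_big; apply: uniq_perm.
    - rewrite map_inj_uniq ?rem_uniq //.
      by apply: (can_inj (g := fun v => sigma C i *m v)) => v; rewrite mulmxA sigma_invol // mul1mx.
    - exact: rem_uniq.
    apply: (uniq_min_size _ _ _).2.
    - rewrite map_inj_uniq ?rem_uniq //.
      by apply: (can_inj (g := fun v => sigma C i *m v)) => v; rewrite mulmxA sigma_invol // mul1mx.
    - move=> x /mapP [v vr ->]; rewrite (mem_rem_uniq _ Pu) in vr.
      rewrite (mem_rem_uniq _ Pu) !inE.
      move: vr; rewrite !inE => /andP [vna vP].
      by case/andP: (sigP i v vP vna) => -> ->.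
    by rewrite size_map.
  set S := \sum_(v <- rem (alpha i) P) v.
  have c1 : delta i 0 = 1 + S i 0 by rewrite {1}E1 !mxE eqxx.
  have := congr1 (fun M : 'cV[int]_n => M i 0) E2; rewrite /= sigma_coord eqxx mulr1 !mxE eqxx /=.
  move: c1; move: (delta i 0) (S i 0) (\sum_j C i j * delta j 0) => x y t; lia.
have dge : forall j, 1 <= delta j 0.
  move=> j; rewrite /delta (big_rem _ (alphaP j)) /= mxE summxE alpha_coord eqxx lerDl.
  rewrite big_seq; apply: sumr_ge0 => v vr.
  by have := mem_rem vr => /memP [_ h]; apply: h.
move=> J hJ.
pose u := fun j => ((delta j 0)%:~R : RR).
have upos : forall j, j \in J -> 0 < u j.
  by move=> j _; rewrite /u ltr0z; have := dge j; lia.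
have hSu : forall i, i \in J -> 0 < SS C J u i.
  move=> i iJ; rewrite /SS (sum_comp_gen u hJ iJ) /cr /u.
  rewrite (eq_bigr (fun j => ((C i j * delta j 0)%:~R : RR))); last by move=> j _; rewrite intrM.
  by rewrite -intr_sum key.
split.
- exact: (det_clause hJ (fun v hv => clause3_of hC hJ upos hSu hv)).
- by exists u; split.
- move=> v hv; exact: (clause3_of hC hJ upos hSu hv).
Qed.

End Main.

Theorem theorem3p3 (n : nat) (hn : (0 < n)%N) (C : 'M[int]_n) (hC : is_GCM C)
  (A : Type) (hA : inhabited A) (rho : 'I_n -> A -> A) (Cs : A -> 'M[int]_n)
  (hsch : is_cartan_scheme rho Cs) (hconn : connected rho)
  (hstd : standard Cs) (hCa : forall a, Cs a = C)
  (R : A -> 'cV[int]_n -> Prop) (hR : is_root_system rho Cs R) :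
  [/\ (forall a : A,
         is_aut_subgroup (fun f => exists b, is_hom rho Cs a b f) /\
         group_iso (fun f => exists b, is_hom rho Cs a b f) (in_weyl C)),
      ((forall a, finite_set (R a)) <-> finite_type C) &
      ((forall a, finite_set (R a)) ->
         (forall a v, R a v <-> is_weyl_root C v) /\
         (forall a b v, R a v <-> R b v))].
Proof.
have HP := is_hom_Pw rho hCa.
split.
- move=> a; split.
    split.
    + by move=> M /HP [w ->]; apply: Pw_unit.
    + by apply/HP; exists [::].
    + move=> M N /HP [w1 ->] /HP [w2 ->]; apply/HP; exists (w2 ++ w1).
      by rewrite Pw_cat.
    + by move=> M /HP [w ->]; apply/HP; exists (rev w); rewrite Pw_inv.
  exists id; split => //.
  + by move=> x /HP [w ->]; apply/in_weyl_Pw => //; exists w.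
  + by move=> y /(in_weyl_Pw hC) [w ->]; exists (Pw C w); split => //; apply/HP; exists w.
- split.
    by move=> hf; case: hA => a0; exact: (ft_of_finite hn hC hsch hCa hR (hf a0)).
  by move=> hft a; exact: (finite_of_ft hn hC hCa hR hft a).
move=> hf; case: hA => a0.
have hft := ft_of_finite hn hC hsch hCa hR (hf a0).
have E : forall a v, R a v <-> Phi C v.
  move=> a v; split; first exact: (R_Phi hn hC hCa hR hft).
  exact: (Phi_R hsch hCa hR a).
split => [a v|a b v]; last by rewrite !E.
rewrite E; split.
  by case=> w [j ->]; exists (Pw C w), j; split => //; apply/in_weyl_Pw => //; exists w.
by case=> M [j [/(in_weyl_Pw hC) [w ->] ->]]; exists w, j.
Qed.
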